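(* Consider the online optimization problem with multi-step memory cost described in the context. Assume that for every $t$ the hitting cost $f(\cdot,y_t)$ is $\alpha$-polyhedral for some $\alpha>0$, and let $\beta=\sum_{i=1}^q\|C_i\|$, where $\|C_i\|$ is the matrix norm induced by the $l_p$ vector norm. Let the expert $\pi$ be the algorithm Robust, which chooses $x_t^\pi=\arg\min_{x\in\mathcal X}f(x,y_t)$ for every $t=1,\dots,T$. Then for any $\lambda\ge1$ and $B\ge0$, ERL (with parameters $\lambda,B$, expert Robust and arbitrary proposed actions) satisfies, for every input $\bm s$, $$\mathrm{cost}(\mathrm{ERL},\bm s)\le \lambda\max\!\left(\tfrac{\beta+1}{\alpha},1\right)\mathrm{cost}(\mathrm{OPT},\bm s)+B.$$
   Context: Problem: Let $\mathcal X\subseteq\mathbb R^d$, $\mathcal Y\subseteq\mathbb R^m$, $f:\mathcal X\times\mathcal Y\to[0,\infty)$, $\|\cdot\|$ the $l_p$ norm on $\mathbb R^d$ ($p\ge1$), a memory length $q\ge1$ and matrices $C_1,\dots,C_q\in\mathbb R^{d\times d}$. An instance $\bm s$ consists of given initial actions $x_{1-q},\dots,x_0\in\mathcal X$ (shared by all algorithms) and contexts $y_1,\dots,y_T\in\mathcal Y$. At step $t$ the context $y_t$ is revealed and an online algorithm irrevocably chooses $x_t\in\mathcal X$. The memory cost is $d(x_t,x_{t-q:t-1})=\|x_t-\sum_{i=1}^q C_ix_{t-i}\|$; for a sequence, $\mathrm{cost}(x_{1:t})=\sum_{\tau=1}^t f(x_\tau,y_\tau)+d(x_\tau,x_{\tau-q:\tau-1})$,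 and the total cost of an algorithm is $\mathrm{cost}(x_{1:T})$ of its actions. $\mathrm{cost}(\mathrm{OPT},\bm s)$ is the infimum of the total cost over all $x_1,\dots,x_T\in\mathcal X$ (offline, all contexts known). $\alpha$-polyhedral: $f(\cdot,y)$ has a unique minimizer $x^*\in\mathcal X$ and $f(x,y)-f(x^*,y)\ge\alpha\|x-x^*\|$ for all $x\in\mathcal X$. ERL (multi-step): given $\lambda\ge1$, $B\ge0$, an expert online algorithm $\pi$ running independently with actions $x_t^\pi$ (and $x_t^\pi=x_t$ for the initial indices $t\le0$), and arbitrary proposed actions $\tilde x_t\in\mathbb R^d$. At step $t$, ERL sets $x_t$ to a minimizer of $\tfrac12\|x-\tilde x_t\|^2$ over $x\in\mathcal X$ subject to $$\mathrm{cost}(x_{1:t-1})+f(x,y_t)+d(x,x_{t-q:t-1})+G(x,x_{t-q:t-1},x^\pi_{t-q:t})\le\lambda\,\mathrm{cost}(x^\pi_{1:t})+B,$$ where $x_{1:t-1}$ are ERL's previous actions and $$G(x,x_{t-q:t-1},x^\pi_{t-q:t})=\sum_{k=1}^{\min(q,T-t)}\Big\|C_kx+\sum_{i=1}^{q-k}C_{k+i}x_{t-i}-\sum_{i=0}^{q-k}C_{k+i}x^\pi_{t-i}\Big\|.$$ *)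

(* Defs.v *)
From HB Require Import structures.
From mathcomp Require Import all_boot all_order all_algebra.
From mathcomp Require Import all_classical all_reals all_analysis.
Set Implicit Arguments. Unset Strict Implicit. Unset Printing Implicit Defensive.
Import Order.TTheory GRing.Theory Num.Theory.
Local Open Scope classical_set_scope.
Local Open Scope ring_scope.

Section Defs.
Variable R : realType.

Definition lpnorm (p : R) (d : nat) (v : 'cV[R]_d) : R :=
  powR (\sum_(i < d) powR `|v i 0| p) p^-1.

Definition opnorm (p : R) (d : nat) (A : 'M[R]_d) : R :=
  sup [set lpnorm p (A *m v) | v in [set v : 'cV[R]_d | lpnorm p v = 1]].

(* Trajectories are indexed by int time; C k for k = 1..q are the memory
   matrices. *)
Definition memcost (p : R) (d q : nat) (C : nat -> 'M[R]_d)
  (z : 'cV[R]_d) (x : int -> 'cV[R]_d) (t : int) : R :=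
  lpnorm p (z - \sum_(1 <= i < q.+1) C i *m x (t - i%:Z)).

Definition cost (p : R) (d m q : nat) (C : nat -> 'M[R]_d)
  (f : 'cV[R]_d -> 'cV[R]_m -> R) (y : nat -> 'cV[R]_m)
  (x : int -> 'cV[R]_d) (t : nat) : R :=
  \sum_(1 <= tau < t.+1)
     (f (x tau%:Z) (y tau) + memcost p q C (x tau%:Z) x tau%:Z).

Definition Gterm (p : R) (d q T : nat) (C : nat -> 'M[R]_d)
  (z : 'cV[R]_d) (x xpi : int -> 'cV[R]_d) (t : nat) : R :=
  \sum_(1 <= k < (minn q (T - t)).+1)
     lpnorm p (C k *m z
               + \sum_(1 <= i < (q - k).+1) C (k + i)%N *m x (t%:Z - i%:Z)
               - \sum_(0 <= i < (q - k).+1) C (k + i)%N *m xpi (t%:Z - i%:Z)).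

Definition polyhedral (p : R) (d : nat) (alpha : R) (X : set 'cV[R]_d)
  (g : 'cV[R]_d -> R) : Prop :=
  exists xs, X xs /\
    (forall x, X x -> g xs <= g x) /\
    (forall z, X z -> (forall x, X x -> g z <= g x) -> z = xs) /\
    (forall x, X x -> g x - g xs >= alpha * lpnorm p (x - xs)).

Definition starts_from (d : nat) (init x : int -> 'cV[R]_d) : Prop :=
  forall k : int, k <= 0 -> x k = init k.

Definition is_robust (d m T : nat) (X : set 'cV[R]_d)
  (f : 'cV[R]_d -> 'cV[R]_m -> R) (y : nat -> 'cV[R]_m)
  (init xpi : int -> 'cV[R]_d) : Prop :=
  starts_from init xpi /\
  forall t : nat, (1 <= t <= T)%N ->
    X (xpi t%:Z) /\ forall x, X x -> f (xpi t%:Z) (y t) <= f x (y t).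

Definition erl_feasible (p : R) (d m q T : nat) (C : nat -> 'M[R]_d)
  (X : set 'cV[R]_d) (f : 'cV[R]_d -> 'cV[R]_m -> R) (y : nat -> 'cV[R]_m)
  (lambda B : R) (x xpi : int -> 'cV[R]_d) (t : nat) (z : 'cV[R]_d) : Prop :=
  X z /\
  cost p q C f y x t.-1 + f z (y t) + memcost p q C z x t%:Z
    + Gterm p q T C z x xpi t
  <= lambda * cost p q C f y xpi t + B.

Definition is_erl_run (p : R) (d m q T : nat) (C : nat -> 'M[R]_d)
  (X : set 'cV[R]_d) (f : 'cV[R]_d -> 'cV[R]_m -> R) (y : nat -> 'cV[R]_m)
  (lambda B : R) (init xpi : int -> 'cV[R]_d) (xt : nat -> 'cV[R]_d)
  (x : int -> 'cV[R]_d) : Prop :=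
  starts_from init x /\
  forall t : nat, (1 <= t <= T)%N ->
    erl_feasible p q T C X f y lambda B x xpi t (x t%:Z) /\
    forall z, erl_feasible p q T C X f y lambda B x xpi t z ->
      (1/2) * lpnorm p (x t%:Z - xt t) ^+ 2 <= (1/2) * lpnorm p (z - xt t) ^+ 2.

Definition opt_cost (p : R) (d m q T : nat) (C : nat -> 'M[R]_d)
  (X : set 'cV[R]_d) (f : 'cV[R]_d -> 'cV[R]_m -> R) (y : nat -> 'cV[R]_m)
  (init : int -> 'cV[R]_d) : R :=
  inf [set cost p q C f y x T | x in
        [set x | starts_from init x /\ forall t : nat, (1 <= t <= T)%N -> X (x t%:Z)]].

End Defs.

(* Main.v *)
Set Warnings "-all".
Require Import Defs.
From HB Require Import structures.
From mathcomp Require Import all_boot all_order all_algebra.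
From mathcomp Require Import all_classical all_reals all_analysis.
From mathcomp Require Import ring lra.
Import Order.TTheory GRing.Theory Num.Theory.
Local Open Scope classical_set_scope.
Local Open Scope ring_scope.

Section Lp.
Variable R : realType.
Variable p : R.
Hypothesis p1 : 1 <= p.

Let p0 : 0 < p. Proof. exact: lt_le_trans p1. Qed.
Let pn0 : p != 0. Proof. by rewrite gt_eqF. Qed.

Lemma conv2 (a u v : R) : 0 <= a <= 1 -> 0 <= u -> 0 <= v ->
  (a * u + (1 - a) * v) `^ p <= a * u `^ p + (1 - a) * v `^ p.
Proof.
move=> /andP[a0 a1] u0 v0.
have := @convex_powR R p p1 (@Itv01 R a a0 a1) u v.
rewrite !inE /= !in_itv /= !andbT => /(_ u0 v0).
by [].
Qed.

Lemma lpnorm_ge0 {d} (v : 'cV[R]_d) : 0 <= lpnorm p v.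
Proof. exact: powR_ge0. Qed.

Lemma lpnorm_pow {d} (v : 'cV[R]_d) : lpnorm p v `^ p = \sum_(i < d) `|v i 0| `^ p.
Proof.
rewrite /lpnorm -powRrM mulVf // powRr1 //.
by apply: sumr_ge0 => i _; exact: powR_ge0.
Qed.

Lemma lpnorm_eq0 {d} (v : 'cV[R]_d) : lpnorm p v = 0 -> v = 0.
Proof.
move=> /powR_eq0_eq0 /eqP; rewrite psumr_eq0; last by move=> i _; exact: powR_ge0.
move=> /allP H; apply/matrixP => i j; rewrite (ord1 j) mxE.
have /H : i \in index_enum 'I_d by rewrite mem_index_enum.
by rewrite /= => /eqP /powR_eq0_eq0 /eqP; rewrite normr_eq0 => /eqP.
Qed.

Lemma lpnorm0 {d} : lpnorm p (0 : 'cV[R]_d) = 0.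
Proof.
rewrite /lpnorm big1 ?powR0 ?invr_eq0 // => i _.
by rewrite mxE normr0 powR0.
Qed.

Lemma lpnormN {d} (v : 'cV[R]_d) : lpnorm p (- v) = lpnorm p v.
Proof. by rewrite /lpnorm; congr powR; apply: eq_bigr => i _; rewrite mxE normrN. Qed.

Lemma lpnormZ {d} (c : R) (v : 'cV[R]_d) : lpnorm p (c *: v) = `|c| * lpnorm p v.
Proof.
rewrite /lpnorm (eq_bigr (fun i => `|c| `^ p * `|v i 0| `^ p)); last first.
  by move=> i _; rewrite mxE normrM powRM.
rewrite -mulr_sumr powRM ?powR_ge0 //; last by apply: sumr_ge0 => i _; exact: powR_ge0.
by rewrite -powRrM mulfV // powRr1.
Qed.

Lemma aux2 (a b x y: R) : 0<a -> 0<b -> a/(a+b) * ((a+b)/a * x) + (1 - a/(a+b)) * ((a+b)/b*y) = x + y.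
Proof.
move=> ha hb. have h1 : a != 0 by rewrite gt_eqF. have h2 : b != 0 by rewrite gt_eqF.
have h3 : a + b != 0 by rewrite gt_eqF // addr_gt0.
field. by rewrite h1 h2 h3.
Qed.

Lemma aux3 (a b z: R) : 0<a -> 0<b -> a/(a+b) * z + (1 - a/(a+b)) * z = z.
Proof. move=> ha hb. ring. Qed.

Lemma aux4 (a b : R) : 0<a -> 0<b -> 0 <= a/(a+b) <= 1.
Proof.
move=> ha hb; have s0 : 0 < a + b by rewrite addr_gt0.
apply/andP; split; first by rewrite divr_ge0 ?ltW.
by rewrite ler_pdivrMr // mul1r lerDl ltW.
Qed.

Lemma lpnormD {d} (u v : 'cV[R]_d) : lpnorm p (u + v) <= lpnorm p u + lpnorm p v.
Proof.
have [a0|a0] := eqVneq (lpnorm p u) 0.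
  by rewrite (lpnorm_eq0 _ a0) add0r lpnorm0 add0r.
have [b0|b0] := eqVneq (lpnorm p v) 0.
  by rewrite (lpnorm_eq0 _ b0) addr0 lpnorm0 addr0.
have agt : 0 < lpnorm p u by rewrite lt0r a0 lpnorm_ge0.
have bgt : 0 < lpnorm p v by rewrite lt0r b0 lpnorm_ge0.
move: (lpnorm p u) (lpnorm p v) (lpnorm_pow u) (lpnorm_pow v) agt bgt => a b Ha Hb agt bgt.
have sgt : 0 < a + b by rewrite addr_gt0.
have t01 := aux4 _ _ agt bgt.
suff H : \sum_(i < d) `|(u + v) i 0| `^ p <= (a + b) `^ p.
  rewrite /lpnorm -[X in _ <= X](@powRr1 _ (a + b) (ltW sgt)).
  rewrite -(mulfV pn0) powRrM.
  apply: (@ge0_ler_powR _ (p^-1)) => //; first by rewrite invr_ge0 ltW.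
    by rewrite nnegrE; apply: sumr_ge0 => i _; exact: powR_ge0.
  by rewrite nnegrE powR_ge0.
apply: (@le_trans _ _ (\sum_(i < d) (a/(a+b) * ((a+b) / a * `|u i 0|) `^ p + (1 - a/(a+b)) * ((a+b) / b * `|v i 0|) `^ p))).
  apply: ler_sum => i _.
  apply: le_trans (conv2 _ _ _ t01 _ _); last 2 first.
  - by rewrite mulr_ge0 // divr_ge0 // ltW.
  - by rewrite mulr_ge0 // divr_ge0 // ltW.
  apply: (@ge0_ler_powR _ p); first exact: ltW.
  - by rewrite nnegrE.
  - by rewrite aux2 // nnegrE addr_ge0.
  by rewrite aux2 // mxE ler_normD.
rewrite big_split /= -!mulr_sumr.
rewrite (eq_bigr (fun i => ((a+b) / a) `^ p * `|u i 0| `^ p)); last first.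
  by move=> i _; rewrite powRM // divr_ge0 // ltW.
rewrite [X in _ + _ * X](eq_bigr (fun i => ((a+b) / b) `^ p * `|v i 0| `^ p)); last first.
  by move=> i _; rewrite powRM // divr_ge0 // ltW.
have a0' := ltW agt; have b0' := ltW bgt.
rewrite -!mulr_sumr -Ha -Hb -!powRM ?divr_ge0 //.
rewrite !divfK ?gt_eqF // aux3 //.
all: try exact: lexx.
all: by rewrite addr_ge0.
Qed.

Lemma lpnorm_sum {d} (I : Type) (r : seq I) (P : pred I) (F : I -> 'cV[R]_d) :
  lpnorm p (\sum_(i <- r | P i) F i) <= \sum_(i <- r | P i) lpnorm p (F i).
Proof.
apply: (big_rec2 (fun a b => lpnorm p a <= b)); first by rewrite lpnorm0.
by move=> i a b _ H; apply: le_trans (lpnormD _ _) _; rewrite lerD2l.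
Qed.

Lemma lpnormB {d} (u v : 'cV[R]_d) : lpnorm p (u - v) <= lpnorm p u + lpnorm p v.
Proof. by apply: le_trans (lpnormD _ _) _; rewrite lpnormN. Qed.

Lemma mulmx_col_sum {d} (A : 'M[R]_d) (v : 'cV[R]_d) :
  A *m v = \sum_(j < d) v j 0 *: col j A.
Proof.
apply/matrixP => i k; rewrite !mxE summxE; apply: eq_bigr => j _.
by rewrite !mxE (ord1 k) mulrC.
Qed.

Lemma lpnorm_unit_coord {d} (w : 'cV[R]_d) j : lpnorm p w = 1 -> `|w j 0| <= 1.
Proof.
move=> H; have := lpnorm_pow w; rewrite H powR1 => Hs.
rewrite leNgt; apply/negP => Hgt.
have : `|w j 0| `^ p <= 1.
  rewrite Hs (bigD1 j) //= lerDl; apply: sumr_ge0 => i _; exact: powR_ge0.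
by rewrite leNgt (lt_le_trans Hgt) // le1r_powR // ltW.
Qed.

Definition opset {d} (A : 'M[R]_d) :=
  [set lpnorm p (A *m v) | v in [set v : 'cV[R]_d | lpnorm p v = 1]].

Lemma opset_ub {d} (A : 'M[R]_d) : ubound (opset A) (\sum_(j < d) lpnorm p (col j A)).
Proof.
move=> _ [w /= Hw <-]; rewrite mulmx_col_sum.
apply: le_trans (lpnorm_sum _ _ _ _) _; apply: ler_sum => j _.
rewrite lpnormZ -[X in _ <= X]mul1r ler_wpM2r ?lpnorm_ge0 //.
exact: lpnorm_unit_coord.
Qed.

Lemma opnorm_ge0 {d} (A : 'M[R]_d) : 0 <= opnorm p A.
Proof.
change (0 <= sup (opset A)).
have [[y Hy]|N] := pselect (opset A !=set0).
  have HS : has_sup (opset A).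
    by split; [exists y | exists (\sum_(j < d) lpnorm p (col j A)); exact: opset_ub].
  apply: (le_trans _ (sup_upper_bound HS Hy)).
  by case: Hy => w _ <-; exact: lpnorm_ge0.
have -> : opset A = set0.
  by apply/seteqP; split => // z Hz; exfalso; apply: N; exists z.
by rewrite sup0.
Qed.

Lemma opnorm_bound {d} (A : 'M[R]_d) (v : 'cV[R]_d) :
  lpnorm p (A *m v) <= opnorm p A * lpnorm p v.
Proof.
have [v0|v0] := eqVneq (lpnorm p v) 0.
  by rewrite (lpnorm_eq0 _ v0) mulmx0 lpnorm0 mulr0.
have ngt : 0 < lpnorm p v by rewrite lt0r v0 lpnorm_ge0.
set w := (lpnorm p v)^-1 *: v.
have Hw : lpnorm p w = 1 by rewrite /w lpnormZ ger0_norm ?invr_ge0 ?lpnorm_ge0 // mulVf.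
have Hy : opset A (lpnorm p (A *m w)) by exists w.
have := sup_upper_bound (conj (ex_intro _ _ Hy) (ex_intro _ _ (opset_ub A))) Hy.
rewrite /w -scalemxAr lpnormZ ger0_norm ?invr_ge0 ?lpnorm_ge0 //.
rewrite ler_pdivrMl // => H; rewrite mulrC; exact: H.
Qed.

End Lp.

Lemma zz (V : zmodType) (a b c d : V) : a - d = (b - c) - (b - a) + (c - d).
Proof. by rewrite opprB addrAC subrKA addrC subrKA. Qed.

Section Shift.
Variable R : realType.

Lemma shift1 (E : int -> R) (T : nat) : (forall k : int, k <= 0 -> E k = 0) ->
  \sum_(1 <= t < T.+1) E (t%:Z - 1) + E T%:Z = \sum_(1 <= t < T.+1) E t%:Z.
Proof.
move=> E0; elim: T => [|T IH].
  by rewrite !big_geq // add0r E0.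
rewrite big_nat_recr //= [in RHS]big_nat_recr //= -IH.
have -> : (T.+1%:Z - 1) = T%:Z by rewrite -addn1 PoszD addrK.
by rewrite addrC.
Qed.

Lemma shift_le (T i : nat) : forall (E : int -> R), (forall k, 0 <= E k) ->
  (forall k : int, k <= 0 -> E k = 0) ->
  \sum_(1 <= t < T.+1) E (t%:Z - i%:Z) <= \sum_(1 <= t < T.+1) E t%:Z.
Proof.
elim: i => [|i IH] E E0 Ez.
  by apply: ler_sum_nat => t _; rewrite subr0.
have Ez' : forall k : int, k <= 0 -> E (k - 1) = 0.
  by move=> k hk; apply: Ez; rewrite lerBlDr add0r (le_trans hk).
have H := IH (fun k => E (k - 1)) (fun k => E0 _) Ez'.
rewrite /= in H.
have -> : \sum_(1 <= t < T.+1) E (t%:Z - i.+1%:Z) = \sum_(1 <= t < T.+1) E (t%:Z - i%:Z - 1).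
  by apply: eq_bigr => t _; rewrite -addn1 PoszD opprD addrA.
apply: le_trans H _.
rewrite -(shift1 E T Ez) lerDl; exact: E0.
Qed.
End Shift.

Lemma final_arith (R : realType) (F F' Mm SE beta alpha : R) : 0 < alpha -> 0 <= beta ->
  0 <= SE -> 0 <= Mm -> 0 <= F -> alpha * SE <= F' - F ->
  F + Mm + SE + beta * SE <= Num.max ((beta + 1) / alpha) 1 * (F' + Mm).
Proof.
move=> a0 beta0 SE0 Mm0 F0 HF.
set M := Num.max _ _.
have M1 : 1 <= M by rewrite le_max lexx orbT.
have Mb : (beta + 1) / alpha <= M by rewrite le_max lexx.
have HF0 : 0 <= F' - F by apply: le_trans HF; rewrite mulr_ge0 // ltW.
have H1 : (beta + 1) * SE <= M * (F' - F).
  apply: (@le_trans _ _ ((beta + 1) / alpha * (alpha * SE))).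
    by rewrite mulrA divfK ?gt_eqF.
  apply: (@le_trans _ _ ((beta + 1) / alpha * (F' - F))).
    by apply: ler_wpM2l => //; rewrite divr_ge0 ?addr_ge0 // ltW.
  exact: ler_wpM2r.
have H2 : 0 <= (M - 1) * F by rewrite mulr_ge0 // subr_ge0.
have H3 : 0 <= (M - 1) * Mm by rewrite mulr_ge0 // subr_ge0.
move: H1 H2 H3; rewrite !mulrBl !mulrBr !mul1r mulrDr mulrDl mul1r.
move: (M * F') (M * F) (M * Mm) (beta * SE) => a b c e; lra.
Qed.

Lemma cost0 (R : realType) (d m q : nat) (p : R) (C : nat -> 'M[R]_d)
  (f : 'cV[R]_d -> 'cV[R]_m -> R) (y : nat -> 'cV[R]_m) (z : int -> 'cV[R]_d) :
  cost p q C f y z 0 = 0.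
Proof. by rewrite /cost big_geq. Qed.

Lemma costS (R : realType) (d m q : nat) (p : R) (C : nat -> 'M[R]_d)
  (f : 'cV[R]_d -> 'cV[R]_m -> R) (y : nat -> 'cV[R]_m) (z : int -> 'cV[R]_d) n :
  cost p q C f y z n.+1 = cost p q C f y z n + (f (z n.+1%:Z) (y n.+1) + memcost p q C (z n.+1%:Z) z n.+1%:Z).
Proof. by rewrite /cost big_nat_recr. Qed.

Lemma robust_bound (R : realType) (d m q T : nat) (p alpha : R) (C : nat -> 'M[R]_d)
  (f : 'cV[R]_d -> 'cV[R]_m -> R) (y : nat -> 'cV[R]_m) (xpi x' : int -> 'cV[R]_d) :
  1 <= p -> 0 < alpha ->
  (forall t : nat, (1 <= t <= T)%N -> 0 <= f (xpi t%:Z) (y t)) ->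
  (forall k : int, k <= 0 -> x' k = xpi k) ->
  (forall t : nat, (1 <= t <= T)%N ->
     alpha * lpnorm p (x' t%:Z - xpi t%:Z) <= f (x' t%:Z) (y t) - f (xpi t%:Z) (y t)) ->
  cost p q C f y xpi T <=
    Num.max (((\sum_(1 <= i < q.+1) opnorm p (C i)) + 1) / alpha) 1 * cost p q C f y x' T.
Proof.
move=> p1 a0 fpos init poly.
set beta := \sum_(1 <= i < q.+1) opnorm p (C i).
set M := Num.max ((beta + 1)/alpha) 1.
pose E k := lpnorm p (x' k - xpi k).
have E0 : forall k, 0 <= E k by move=> k; exact: lpnorm_ge0.
have Ez : forall k : int, k <= 0 -> E k = 0.
  by move=> k hk; rewrite /E init // subrr lpnorm0.
have memb : forall t : nat, memcost p q C (xpi t%:Z) xpi t%:Z <=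
    memcost p q C (x' t%:Z) x' t%:Z + E t%:Z
    + \sum_(1 <= i < q.+1) opnorm p (C i) * E (t%:Z - i%:Z).
  move=> t; rewrite /memcost.
  rewrite (@zz _ (xpi t%:Z) (x' t%:Z) (\sum_(1 <= i < q.+1) C i *m x' (t%:Z - i%:Z))).
  rewrite -sumrB.
  apply: le_trans (lpnormD _ _ p1 _ _) _.
  apply: lerD; first exact: lpnormB.
  apply: le_trans (lpnorm_sum _ _ p1 _ _ _ _) _.
  apply: ler_sum => i _; rewrite -mulmxBr; exact: opnorm_bound.
pose F := \sum_(1 <= t < T.+1) f (xpi t%:Z) (y t).
pose F' := \sum_(1 <= t < T.+1) f (x' t%:Z) (y t).
pose Mm := \sum_(1 <= t < T.+1) memcost p q C (x' t%:Z) x' t%:Z.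
pose SE := \sum_(1 <= t < T.+1) E t%:Z.
have beta0 : 0 <= beta by apply: sumr_ge0 => i _; exact: opnorm_ge0.
have SE0 : 0 <= SE by apply: sumr_ge0 => i _; exact: E0.
have Mm0 : 0 <= Mm by apply: sumr_ge0 => i _; exact: lpnorm_ge0.
have F0 : 0 <= F.
  by rewrite /F big_nat_cond; apply: sumr_ge0 => t /andP[Ht _]; exact: fpos.
have HF : alpha * SE <= F' - F.
  by rewrite /SE mulr_sumr /F' /F -sumrB; apply: ler_sum_nat => t Ht; exact: poly.
have Hc : cost p q C f y xpi T <= F + Mm + SE + beta * SE.
  apply: (@le_trans _ _ (\sum_(1 <= t < T.+1) (f (xpi t%:Z) (y t) +
      (memcost p q C (x' t%:Z) x' t%:Z + E t%:Z
      + \sum_(1 <= i < q.+1) opnorm p (C i) * E (t%:Z - i%:Z))))).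
    by apply: ler_sum_nat => t _; rewrite lerD2l memb.
  rewrite big_split /= big_split /= big_split /= !addrA.
  apply: lerD; first exact: lexx.
  rewrite exchange_big_nat /beta mulr_suml.
  apply: ler_sum_nat => i _; rewrite -mulr_sumr.
  by apply: ler_wpM2l; [exact: opnorm_ge0 | exact: shift_le].
have Hx : cost p q C f y x' T = F' + Mm by rewrite /cost big_split.
rewrite Hx; apply: le_trans Hc _.
exact: final_arith.
Qed.

Theorem corollary2 (R : realType) (d m q T : nat) (p alpha lambda B : R)
  (X : set 'cV[R]_d) (Y : set 'cV[R]_m) (f : 'cV[R]_d -> 'cV[R]_m -> R)
  (C : nat -> 'M[R]_d) (init : int -> 'cV[R]_d) (y : nat -> 'cV[R]_m)
  (xpi : int -> 'cV[R]_d) (xt : nat -> 'cV[R]_d) (x : int -> 'cV[R]_d) :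
  1 <= p -> (1 <= q)%N ->
  (forall u v, X u -> Y v -> 0 <= f u v) ->
  (forall k : int, 1 - q%:Z <= k <= 0 -> X (init k)) ->
  (forall t : nat, (1 <= t <= T)%N -> Y (y t)) ->
  0 < alpha ->
  (forall t : nat, (1 <= t <= T)%N -> polyhedral p alpha X (fun u => f u (y t))) ->
  1 <= lambda -> 0 <= B ->
  is_robust T X f y init xpi ->
  is_erl_run p q T C X f y lambda B init xpi xt x ->
  let beta := \sum_(1 <= i < q.+1) opnorm p (C i) in
  cost p q C f y x T
    <= lambda * Num.max ((beta + 1) / alpha) 1 * opt_cost p q T C X f y init + B.
Proof.
move=> p1 q1 f0 Xinit Yy a0 poly lam1 B0 [xpi0 rob] [x0 erl].
change (cost p q C f y x T <= lambda * Num.max (((\sum_(1 <= i < q.+1) opnorm p (C i)) + 1) / alpha) 1 * opt_cost p q T C X f y init + B).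
set beta := \sum_(1 <= i < q.+1) opnorm p (C i).
have RB : forall x', starts_from init x' -> (forall t : nat, (1 <= t <= T)%N -> X (x' t%:Z)) ->
   cost p q C f y xpi T <= Num.max ((beta + 1) / alpha) 1 * cost p q C f y x' T.
  move=> x' sx' Xx'.
  apply: robust_bound; [exact: p1 | exact: a0 | | |].
  - move=> t Ht; have [Xt _] := rob t Ht; exact: f0 Xt (Yy t Ht).
  - by move=> k hk; rewrite (sx' k hk) (xpi0 k hk).
  - move=> t Ht; have [xs [Xxs [minxs [uq polyin]]]] := poly t Ht.
    have [Xt mint] := rob t Ht.
    have e : xpi t%:Z = xs := uq _ Xt mint.
    rewrite e; exact: polyin (Xx' t Ht).
set M := Num.max ((beta + 1) / alpha) 1.
have Mpos : 0 < M by rewrite lt_max ltr01 orbT.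
have Hopt : cost p q C f y xpi T <= M * opt_cost p q T C X f y init.
  have L : cost p q C f y xpi T / M <= opt_cost p q T C X f y init.
    apply: lb_le_inf.
      exists (cost p q C f y xpi T); exists xpi => //; split => // t Ht.
      by case: (rob t Ht).
    move=> _ [x' [sx' Xx'] <-]; rewrite ler_pdivrMr // mulrC; exact: RB.
  have := ler_wpM2l (ltW Mpos) L.
  by rewrite [M * (_ / _)]mulrC divfK ?gt_eqF.
have H1 : cost p q C f y x T <= lambda * cost p q C f y xpi T + B.
  have [T0|Tpos] := posnP T.
    rewrite T0 !cost0 mulr0 add0r; exact: B0.
  have HT : (1 <= T <= T)%N by rewrite Tpos leqnn.
  have [[_ Hf] _] := erl T HT.
  apply: le_trans Hf.
  have -> : cost p q C f y x T = cost p q C f y x T.-1 + (f (x T%:Z) (y T) + memcost p q C (x T%:Z) x T%:Z).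
    by rewrite -{1}(prednK Tpos) costS prednK.
  rewrite addrA lerDl; apply: sumr_ge0 => k _; exact: lpnorm_ge0.
apply: le_trans H1 _; rewrite lerD2r -mulrA; apply: ler_wpM2l => //.
exact: le_trans lam1.
Qed.
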